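(* Let $R_1,R_2$ be commutative rings with nonzero identity, let $I_1$ be a proper ideal of $R_1$ and $I_2$ a proper ideal of $R_2$, and put $R=R_1\times R_2$, $I=I_1\times I_2$. Then: (a) If at least one of the graphs $\Gamma''_{I_1}(R_1)$, $\Gamma''_{I_2}(R_2)$ is not totally disconnected (i.e. has at least one edge), then the girth of $\Gamma''_I(R)$ equals $3$. (b) If $R_1\setminus I_1\neq\{1_{R_1}\}$ and $R_2\setminus I_2\neq\{1_{R_2}\}$, then the girth of $\Gamma''_I(R)$ is at most $4$.
   Context: $R_1\times R_2$ has componentwise operations. For a commutative ring $S$ and an ideal $J$ of $S$, $\Gamma''_J(S)$ is the simple undirected graph whose vertex set is $\{x\in S\setminus J : xS+J\neq S\}$, and two distinct vertices $x,y$ are adjacent if and only if $x\notin yS+J$ and $y\notin xS+J$. A graph is totally disconnected if it has no edges. The girth of a graph is the length of a shortest cycle (and $\infty$ if there is no cycle). *)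

(* Defs.v *)
From HB Require Import structures.
From mathcomp Require Import all_boot all_algebra.
Set Implicit Arguments. Unset Strict Implicit. Unset Printing Implicit Defensive.
Import GRing.Theory.
Local Open Scope ring_scope.

Definition is_ideal_pred (S : comNzRingType) (J : S -> Prop) : Prop :=
  [/\ J 0,
      (forall a b, J a -> J b -> J (a + b)),
      (forall a, J a -> J (- a)) &
      (forall s a, J a -> J (s * a))].

Definition proper_ideal_pred (S : comNzRingType) (J : S -> Prop) : Prop :=
  is_ideal_pred J /\ ~ J 1.

Definition in_xSJ (S : comNzRingType) (J : S -> Prop) (x z : S) : Prop :=
  exists s j, J j /\ z = x * s + j.

(* Vertices of Gamma''_J(S): x \notin J and xS + J <> S. *)
Definition gvert (S : comNzRingType) (J : S -> Prop) (x : S) : Prop :=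
  ~ J x /\ ~ (forall z, in_xSJ J x z).

(* Adjacency in Gamma''_J(S) (simple graph: distinct vertices). *)
Definition gadj (S : comNzRingType) (J : S -> Prop) (x y : S) : Prop :=
  [/\ gvert J x, gvert J y, x <> y, ~ in_xSJ J y x & ~ in_xSJ J x y].

Definition totally_disconnected (T : Type) (V : T -> Prop) (E : T -> T -> Prop) :=
  forall x y, V x -> V y -> ~ E x y.

Definition is_cycle (T : Type) (V : T -> Prop) (E : T -> T -> Prop)
  (n : nat) (f : nat -> T) : Prop :=
  [/\ (3 <= n)%N,
      (forall i, (i < n)%N -> V (f i)),
      (forall i j, (i < j < n)%N -> f i <> f j) &
      (forall i, (i < n)%N -> E (f i) (f (i.+1 %% n)%N))].

Definition has_cycle_of_length (T : Type) (V : T -> Prop) (E : T -> T -> Prop)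
  (n : nat) : Prop := exists f, is_cycle V E n f.

Definition girth_eq (T : Type) (V : T -> Prop) (E : T -> T -> Prop) (n : nat) :=
  has_cycle_of_length V E n /\ forall m, has_cycle_of_length V E m -> (n <= m)%N.

(* girth <= n (girth is infinity when there is no cycle) *)
Definition girth_le (T : Type) (V : T -> Prop) (E : T -> T -> Prop) (n : nat) :=
  exists m, (m <= n)%N /\ has_cycle_of_length V E m.

Definition prod_ideal (R1 R2 : comNzRingType) (I1 : R1 -> Prop) (I2 : R2 -> Prop)
  : R1 * R2 -> Prop := fun p => I1 p.1 /\ I2 p.2.

(* Main.v *)
Require Import Defs.
From HB Require Import structures.
From mathcomp Require Import all_boot all_algebra.
Local Open Scope ring_scope.
Import GRing.Theory.
From Stdlib Require Import Classical.

Section H.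
Variables (R1 R2 : comNzRingType) (I1 : R1 -> Prop) (I2 : R2 -> Prop).
Hypothesis P1 : proper_ideal_pred I1.
Hypothesis P2 : proper_ideal_pred I2.

Lemma proj1x x1 x2 z1 z2 : in_xSJ (prod_ideal I1 I2) (x1, x2) (z1, z2) -> in_xSJ I1 x1 z1.
Proof. by move=> [[s1 s2] [[j1 j2] [[h1 h2] [-> _]]]]; exists s1, j1. Qed.
Lemma proj2x x1 x2 z1 z2 : in_xSJ (prod_ideal I1 I2) (x1, x2) (z1, z2) -> in_xSJ I2 x2 z2.
Proof. by move=> [[s1 s2] [[j1 j2] [[h1 h2] [_ ->]]]]; exists s2, j2. Qed.

Lemma zero1 z : in_xSJ I1 0 z -> I1 z.
Proof. by move=> [s [j [hj ->]]]; rewrite mul0r add0r. Qed.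
Lemma zero2 z : in_xSJ I2 0 z -> I2 z.
Proof. by move=> [s [j [hj ->]]]; rewrite mul0r add0r. Qed.

Lemma vL u : ~ I1 u -> gvert (prod_ideal I1 I2) (u, 0).
Proof.
move=> hu; split; first by case.
move=> /(_ (0, 1)) /proj2x /zero2; case: P2 => _; exact.
Qed.
Lemma vR v : ~ I2 v -> gvert (prod_ideal I1 I2) (0, v).
Proof.
move=> hv; split; first by case.
move=> /(_ (1, 0)) /proj1x /zero1; case: P1 => _; exact.
Qed.

Lemma adjLR u v : ~ I1 u -> ~ I2 v -> gadj (prod_ideal I1 I2) (u, 0) (0, v).
Proof.
move=> hu hv; split; [exact: vL | exact: vR | | |].
- case=> eu _; apply: hu; rewrite eu; by case: P1 => -[].
- by move/proj1x/zero1.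
- by move/proj2x/zero2.
Qed.
Lemma adjRL u v : ~ I1 u -> ~ I2 v -> gadj (prod_ideal I1 I2) (0, v) (u, 0).
Proof.
move=> hu hv; have [a b c d e] := @adjLR u v hu hv; split => //.
by move=> h; apply: c; rewrite h.
Qed.

Lemma adjLL x y : gadj I1 x y -> gadj (prod_ideal I1 I2) (x, 0) (y, 0).
Proof.
move=> [[hx _] [hy _] xy a b]; split; [exact: vL | exact: vL | | |].
- by case.
- by move/proj1x.
- by move/proj1x.
Qed.
Lemma adjRR x y : gadj I2 x y -> gadj (prod_ideal I1 I2) (0, x) (0, y).
Proof.
move=> [[hx _] [hy _] xy a b]; split; [exact: vR | exact: vR | | |].
- by case.
- by move/proj2x.
- by move/proj2x.
Qed.
End H.

Definition f3 {T : Type} (a b c : T) (i : nat) := match i with 0%N => a | 1%N => b | _ => c end.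
Definition f4 {T : Type} (a b c d : T) (i : nat) :=
  match i with 0%N => a | 1%N => b | 2%N => c | _ => d end.

Lemma cyc3 (T : Type) (V : T -> Prop) (E : T -> T -> Prop) a b c :
  (forall x y, E x y -> V x /\ V y) ->
  a <> b -> a <> c -> b <> c -> E a b -> E b c -> E c a ->
  has_cycle_of_length V E 3.
Proof.
move=> EV ab ac bc e1 e2 e3; exists (f3 a b c); split => //.
- move=> [|[|[|i]]] // _ /=; [exact: (EV _ _ e1).1 | exact: (EV _ _ e2).1 | exact: (EV _ _ e3).1].
- move=> i j /andP[lij ljn]; by move: i j lij ljn => [|[|[|i]]] [|[|[|j]]].
- by move=> [|[|[|i]]] //= _.
Qed.

Lemma cyc4 (T : Type) (V : T -> Prop) (E : T -> T -> Prop) a b c d :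
  (forall x y, E x y -> V x /\ V y) ->
  a <> b -> a <> c -> a <> d -> b <> c -> b <> d -> c <> d ->
  E a b -> E b c -> E c d -> E d a ->
  has_cycle_of_length V E 4.
Proof.
move=> EV ab ac ad bc bd cd e1 e2 e3 e4; exists (f4 a b c d); split => //.
- move=> [|[|[|[|i]]]] // _ /=;
  [exact: (EV _ _ e1).1 | exact: (EV _ _ e2).1 | exact: (EV _ _ e3).1 | exact: (EV _ _ e4).1].
- move=> i j /andP[lij ljn]; by move: i j lij ljn => [|[|[|[|i]]]] [|[|[|[|j]]]].
- by move=> [|[|[|[|i]]]] //= _.
Qed.

Lemma gadjV (S : comNzRingType) (J : S -> Prop) x y : gadj J x y -> gvert J x /\ gvert J y.
Proof. by case. Qed.

Theorem proposition2p8 (R1 R2 : comNzRingType) (I1 : R1 -> Prop) (I2 : R2 -> Prop) :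
  proper_ideal_pred I1 -> proper_ideal_pred I2 ->
  ((~ totally_disconnected (gvert I1) (gadj I1) \/
    ~ totally_disconnected (gvert I2) (gadj I2)) ->
     girth_eq (gvert (prod_ideal I1 I2)) (gadj (prod_ideal I1 I2)) 3) /\
  ((~ (forall x : R1, ~ I1 x <-> x = 1)) ->
   (~ (forall x : R2, ~ I2 x <-> x = 1)) ->
     girth_le (gvert (prod_ideal I1 I2)) (gadj (prod_ideal I1 I2)) 4).
Proof.
move=> P1 P2.
have n1 : ~ I1 1 by case: P1.
have n2 : ~ I2 1 by case: P2.
have z1 : I1 0 by case: P1 => -[].
have z2 : I2 0 by case: P2 => -[].
split.
  move=> H; split; last by move=> m [f [h _ _ _]].
  have ex : forall (A : Type) (V : A -> Prop) (E : A -> A -> Prop),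
      ~ totally_disconnected V E -> exists x y, E x y.
    move=> A V E h; apply: NNPP => hn; apply: h => x y _ _ e.
    by apply: hn; exists x, y.
  case: H => /ex [x [y e]].
  - have [[hx _] [hy _] xy _ _] := e.
    apply: (@cyc3 _ _ _ (x, 0) (y, 0) (0, 1)).
    + exact: gadjV.
    + by case.
    + by case=> _ /esym/eqP; rewrite oner_eq0.
    + by case=> _ /esym/eqP; rewrite oner_eq0.
    + exact: adjLL.
    + by apply: adjLR.
    + by apply: adjRL.
  - have [[hx _] [hy _] xy _ _] := e.
    apply: (@cyc3 _ _ _ (0, x) (0, y) (1, 0)).
    + exact: gadjV.
    + by case.
    + by case=> /esym/eqP; rewrite oner_eq0.
    + by case=> /esym/eqP; rewrite oner_eq0.
    + exact: adjRR.
    + by apply: adjRL.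
    + by apply: adjLR.
have pick : forall (S : comNzRingType) (J : S -> Prop), ~ J 1 ->
    ~ (forall x : S, ~ J x <-> x = 1) -> exists a, ~ J a /\ a <> 1.
  move=> S J nJ h; apply: NNPP => hn; apply: h => x; split.
    move=> hx; apply: NNPP => ne; apply: hn; by exists x.
  by move=> ->.
move=> /(pick _ _ n1) [a [ha a1]] /(pick _ _ n2) [b [hb b1]].
exists 4%N; split => //.
have a0 : a <> 0 by move=> e; apply: ha; rewrite e.
have b0 : b <> 0 by move=> e; apply: hb; rewrite e.
apply: (@cyc4 _ _ _ (1, 0) (0, 1) (a, 0) (0, b)).
- exact: gadjV.
- by case=> /eqP; rewrite oner_eq0.
- by case=> /esym.
- by case=> /eqP; rewrite oner_eq0.
- by case=> /esym.
- by case=> /esym.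
- by case=> /a0.
- by apply: adjLR.
- by apply: adjRL.
- by apply: adjLR.
- by apply: adjRL.
Qed.
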